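(* Let $n\ge1$, let $\lambda=(\lambda_0,\dots,\lambda_n)$ be a marking of $A_n$ with $\lambda_0\ge\lambda_1\ge\cdots\ge\lambda_n$, and let $(U_1,U_2)$ be any admissible decomposition of $(P_n,A_n,\lambda)$. Then the number of lattice points in $\mathcal{CO}_{U_1,U_2}(\lambda)$ is $$\prod_{0\le i<j\le n}\frac{\lambda_i-\lambda_j+j-i}{j-i}.$$
   Context: $P_n$ is the poset on $\{p_{i,j}: 0\le i\le j\le n\}$ whose cover relations are exactly $p_{i-1,j}\to p_{i,j}\to p_{i-1,j-1}$ for $1\le i\le j\le n$ ($q\to p$ means $p$ covers $q$). $A_n=\{p_{0,0},\dots,p_{0,n}\}$ with marking $\lambda(p_{0,k})=\lambda_k\in\mathbb{Z}_{\ge0}$. A decomposition is a pair $(U_1,U_2)$ of disjoint sets with $U_1\cup U_2=P_n\setminus A_n$; it is admissible if there are no $u_1\in U_1$, $u_2\in U_2$ with $u_1\prec u_2$. With $A_1=A_n\cup U_1$, the marked chain-order polytope $\mathcal{CO}_{U_1,U_2}(\lambda)\subset\mathbb{R}^{P_n\setminus A_n}$ is the set of $(x_p)$ such that: (i) $x_p\le\lambda_a$ whenever $p\in U_1$, $a\in A_n$, $p\prec a$; (ii) $\lambda_b\le x_q$ whenever $q\in U_1$, $b\in A_n$, $b\prec q$; (iii) $x_p\le x_q$ whenever $p,q\in U_1$, $p\prec q$; (iv) $x_p\ge0$ for $p\in U_2$; (v) for every chain $b\prec p_m\prec\cdots\prec p_1\prec a$ with $m\ge1$, $a,b\in A_1$,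 $p_i\in U_2$: $x_{p_1}+\cdots+x_{p_m}\le\lambda_a-\lambda_b$, where $\lambda_q$ means $x_q$ for $q\in U_1$; (vi) for every chain $p_1\prec\cdots\prec p_s\prec q$ with $q\in U_1$, $p_i\in U_2$: $x_{p_1}+\cdots+x_{p_s}\le x_q$. (Here $\lambda_a$ for $a=p_{0,k}$ means $\lambda_k$.) Lattice points are the points of $\mathcal{CO}_{U_1,U_2}(\lambda)\cap\mathbb{Z}^{P_n\setminus A_n}$. *)

(* Defs.v *)
From mathcomp Require Import all_boot all_order all_algebra.
Set Implicit Arguments. Unset Strict Implicit. Unset Printing Implicit Defensive.
Import Order.TTheory GRing.Theory Num.Theory.

(* Ambient index type: pairs (i,j) with 0 <= i,j <= n; p_{i,j} is the pair (i,j). *)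
Definition T (n : nat) := ('I_n.+1 * 'I_n.+1)%type.

Definition Pn (n : nat) : {set T n} := [set p : T n | (p.1 <= p.2)%N].

Definition An (n : nat) : {set T n} := [set p : T n | (p.1 : nat) == 0%N].

(* Cover relation: cov q p  means  "p covers q" (q -> p):
   p_{i-1,j} -> p_{i,j}  and  p_{i,j} -> p_{i-1,j-1}, for 1 <= i <= j <= n. *)
Definition cov (n : nat) (q p : T n) : bool :=
  [&& q \in Pn n, p \in Pn n &
      ((((p.1 : nat) == (q.1 : nat).+1) && ((p.2 : nat) == q.2))
    || (((q.1 : nat) == (p.1 : nat).+1) && ((q.2 : nat) == (p.2 : nat).+1)))].

Definition prec (n : nat) (q p : T n) : bool := connect (@cov n) q p && (q != p).

Definition is_decomposition (n : nat) (U1 U2 : {set T n}) : Prop :=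
  U1 :&: U2 = set0 /\ U1 :|: U2 = Pn n :\: An n.

Definition admissible (n : nat) (U1 U2 : {set T n}) : Prop :=
  ~ (exists u1 u2, [/\ u1 \in U1, u2 \in U2 & prec u1 u2]).

Definition Dom (n : nat) := {p : T n | p \in Pn n :\: An n}.

(* Points of R^{P_n \ A_n} with integer coordinates. *)
Definition IPoint (n : nat) := {ffun Dom n -> int}.

(* x_p for p in P_n \ A_n (0 elsewhere, never used there). *)
Definition xv (n : nat) (x : IPoint n) (p : T n) : int :=
  if (insub p : option (Dom n)) is Some d then x d else 0.

Definition lamv (n : nat) (lam : 'I_n.+1 -> nat) (a : T n) : int := (lam a.2)%:Z.

(* lambda_q for q in A_1 = A_n ∪ U_1 (x_q if q in U_1). *)
Definition ext (n : nat) (lam : 'I_n.+1 -> nat) (x : IPoint n) (q : T n) : int :=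
  if q \in An n then lamv lam q else xv x q.

Definition inCO (n : nat) (lam : 'I_n.+1 -> nat) (U1 U2 : {set T n})
  (x : IPoint n) : Prop :=
  [/\ forall p a, p \in U1 -> a \in An n -> prec p a -> xv x p <= lamv lam a,
      forall q b, q \in U1 -> b \in An n -> prec b q -> lamv lam b <= xv x q,
      forall p q, p \in U1 -> q \in U1 -> prec p q -> xv x p <= xv x q,
      forall p, p \in U2 -> 0 <= xv x p &
     (      (* (v) chain b < c_0 < ... < c_last < a, c = [p_m; ...; p_1] *)
      forall (a b : T n) (c : seq (T n)),
        a \in An n :|: U1 -> b \in An n :|: U1 -> c != [::] ->
        all (fun p => p \in U2) c -> path (@prec n) b (rcons c a) ->
        \sum_(p <- c) xv x p <= ext lam x a - ext lam x b) /\
     ((* (vi) chain c_0 < ... < c_last < q, c = [p_1; ...; p_s] *)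
      forall (q : T n) (c : seq (T n)),
        q \in U1 -> c != [::] -> all (fun p => p \in U2) c ->
        sorted (@prec n) (rcons c q) ->
        \sum_(p <- c) xv x p <= xv x q)]%R.

(* Main.v *)
Require Import Defs.
From mathcomp Require Import all_boot all_order all_algebra zify.
Set Implicit Arguments. Unset Strict Implicit. Unset Printing Implicit Defensive.
Import Order.TTheory GRing.Theory Num.Theory.

Section Alg.
Local Open Scope ring_scope.

Definition qpol (j : nat) : {poly rat} :=
  \prod_(c <- [seq (k%:R : rat) | k <- iota 0 j]) ('X - c%:P).

Lemma ffact_rat (x j : nat) :
  ((x ^_ j)%:R : rat) = (qpol j).[x%:R].
Proof.
rewrite /qpol horner_prod.
elim: j => [|j IH]; first by rewrite big_nil ffactn0.
rewrite -addn1 iotaD map_cat big_cat /= big_cons big_nil add0n.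
rewrite addn1 ffactnSr natrM -IH mulr1.
rewrite hornerXsubC.
case: (leqP j x) => hjx; first by rewrite natrB.
by rewrite ffact_small // !mul0r.
Qed.

Lemma qpol_size j : size (qpol j) = j.+1.
Proof. by rewrite /qpol size_prod_XsubC size_map size_iota. Qed.

Lemma qpol_monic j : qpol j \is monic.
Proof. exact: monic_prod_XsubC. Qed.

Lemma bin_rat (x j : nat) : ('C(x, j)%:R : rat) = (qpol j).[x%:R] / (j`!)%:R.
Proof.
rewrite -ffact_rat -bin_ffact natrM mulfK //.
by rewrite pnatr_eq0 -lt0n fact_gt0.
Qed.

Definition Cmx (m : nat) (a : nat -> nat) : 'M[rat]_m :=
  \matrix_(i < m, j < m) ('C(a i, j))%:R.

Lemma det_Cmx m a :
  \det (Cmx m a) = (\prod_(i < m) \prod_(j < m | (i < j)%N) ((a j)%:R - (a i)%:R))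
                   / \prod_(j < m) (j`!)%:R.
Proof.
pose v : 'rV[rat]_m := \row_j (a j)%:R.
pose Q : 'M[rat]_m := \matrix_(k, j) (qpol j)`_k.
pose D : 'M[rat]_m := diag_mx (\row_(j < m) ((j`!)%:R)^-1).
have -> : Cmx m a = (Vandermonde m v)^T *m Q *m D.
  apply/matrixP => i j; rewrite !mxE.
  rewrite (bigD1 j) //= big1 ?addr0; last first.
    by move=> k hk; rewrite !mxE (negbTE hk) mulr0n mulr0.
  rewrite !mxE eqxx mulr1n bin_rat; congr (_ * _).
  rewrite (@horner_coef_wide _ m); last by rewrite qpol_size.
  by apply: eq_bigr => k _; rewrite !mxE mulrC.
rewrite (det_mulmx ((Vandermonde m v)^T *m Q)). rewrite det_mulmx det_tr det_Vandermonde det_diag.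
have -> : \det Q = 1.
  rewrite -det_tr det_trig; last first.
    apply/is_trig_mxP => i j hij; rewrite !mxE.
    by rewrite nth_default // qpol_size.
  apply: big1 => i _; rewrite !mxE.
  have := qpol_monic i; rewrite monicE /lead_coef qpol_size => /eqP.
  by [].
rewrite mulr1; congr (_ * _).
  apply: eq_bigr => i _; apply: eq_bigr => j _; by rewrite !mxE.
rewrite -prodfV; apply: eq_bigr => j _; by rewrite mxE.
Qed.

Lemma sum_shift (n : nat) (F : nat -> rat) (i : nat) :
  \sum_(k < n) ((i == k.+1)%:R * F k) = if (0 < i <= n)%N then F i.-1 else 0.
Proof.
elim: n => [|n IH]; first by rewrite big_ord0; case: i => [|i] //=; rewrite andbF.
rewrite big_ord_recr /= IH.
case: i IH => [|i] IH /=; first by rewrite mul0r addr0.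
rewrite eqSS ltnS; case: (ltngtP i n) => h.
- by rewrite mul0r addr0.
- by rewrite mul0r addr0.
- by rewrite h mul1r add0r.
Qed.

Lemma det_Cmx_step m (a : nat -> nat) :
  \det (Cmx m.+2 a) =
  \det (\matrix_(i < m.+1, j < m.+1) ('C(a i.+1, j.+1)%:R - 'C(a i, j.+1)%:R : rat)).
Proof.
pose S : 'M[rat]_m.+2 := \matrix_(i, j) (i == j.+1 :> nat)%:R.
pose L : 'M[rat]_m.+2 := 1%:M - S.
have dL : \det L = 1.
  rewrite det_trig; last first.
    apply/is_trig_mxP => i j hij; rewrite !mxE.
    rewrite (_ : (i == j) = false); last by apply/negP => /eqP e; move: hij; rewrite e ltnn.
    by rewrite (_ : (i == j.+1 :> nat) = false) ?subrr //; apply/negP => /eqP; lia.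
  apply: big1 => i _; rewrite !mxE eqxx.
  by rewrite (_ : (i == i.+1 :> nat) = false) ?subr0 //; apply/negP => /eqP; lia.
have -> : \det (Cmx m.+2 a) = \det (L *m Cmx m.+2 a) by rewrite det_mulmx dL mul1r.
set B := L *m _.
have BE : forall i j : 'I_m.+2, B i j =
   'C(a i, j)%:R - (if (0 < i)%N then 'C(a i.-1, j)%:R else 0).
  move=> i j; rewrite /B mulmxBl mul1mx !mxE.
  congr (_ - _).
  rewrite (eq_bigr (fun k : 'I_m.+2 => (i == k.+1 :> nat)%:R * ('C(a k, j))%:R)); last first.
    by move=> k _; rewrite !mxE.
  rewrite (sum_shift m.+2 (fun k => ('C(a k, j))%:R : rat) i).
  by case: (nat_of_ord i) (ltn_ord i) => [|i'] //= /ltnW ->.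
rewrite (expand_det_col _ ord0) big_ord_recl.
rewrite big1 ?addr0; last first.
  move=> i _; rewrite BE /= !bin0 subrr mul0r //.
rewrite BE /= subr0 bin0 mul1r /cofactor /= expr0 mul1r.
congr (\det _); apply/matrixP => i j; rewrite [LHS]mxE [LHS]mxE BE mxE /=.
by rewrite /bump /= !add1n.
Qed.

Lemma hockey (x k j : nat) :
  \sum_(t <- iota x k) ('C(t, j)%:R : rat) = 'C(x + k, j.+1)%:R - 'C(x, j.+1)%:R.
Proof.
elim: k => [|k IH]; first by rewrite big_nil addn0 subrr.
rewrite -addn1 iotaD big_cat big_seq1 IH addnA addn1 binS natrD.
by rewrite addrAC.
Qed.

Fixpoint interls (a : seq nat) : seq (seq nat) :=
  match a with
  | x :: ((y :: _) as r) => [seq t :: b | t <- iota x (y - x), b <- interls r]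
  | _ => [:: [::]]
  end.

Lemma sum_interls_prod (a : seq nat) (h : nat -> nat -> rat) :
  \sum_(b <- interls a) \prod_(i < (size a).-1) h i (nth 0%N b i) =
  \prod_(i < (size a).-1)
     \sum_(t <- iota (nth 0%N a i) (nth 0%N a i.+1 - nth 0%N a i)) h i t.
Proof.
elim: a h => [|x r IH] h; first by rewrite big_seq1 !big_ord0.
case: r IH => [|y r] IH; first by rewrite /= big_seq1 !big_ord0.
have -> : interls [:: x, y & r] = [seq t :: b | t <- iota x (y - x), b <- interls (y :: r)] by [].
rewrite big_allpairs_dep big_ord_recl big_distrl.
apply: eq_bigr => t _.
rewrite [X in _ = _ * X](_ : _ = \sum_(b <- interls (y :: r)) \prod_(i < (size (y :: r)).-1) h i.+1 (nth 0%N b i)); last first.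
  by rewrite (IH (fun i => h i.+1)); apply: eq_bigr.
rewrite big_distrr; apply: eq_bigr => b _; rewrite big_ord_recl.
by [].
Qed.

Lemma sum_E m (a : seq nat) : size a = m.+2 -> sorted leq a ->
  \sum_(b <- interls a) \det (Cmx m.+1 (nth 0%N b)) = \det (Cmx m.+2 (nth 0%N a)).
Proof.
move=> sa so.
rewrite det_Cmx_step.
rewrite /determinant.
under eq_bigr => b _ do rewrite /determinant.
rewrite exchange_big /=; apply: eq_bigr => s _.
rewrite -big_distrr /=; congr (_ * _).
have := sum_interls_prod a (fun i t => ('C(t, perm.fun_of_perm s (@inord m i)))%:R).
rewrite sa /= => E1.
rewrite (eq_bigr (fun b => \prod_(i < m.+1) ('C(nth 0%N b i, perm.fun_of_perm s (@inord m i)))%:R)); last first.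
  move=> b _; apply: eq_bigr => i _; rewrite !mxE inord_val //.
rewrite E1; apply: eq_bigr => i _; rewrite !mxE inord_val hockey subnKC //.
have /sortedP := so; apply; rewrite sa; by rewrite ltnS ltn_ord.
Qed.

Lemma interls_mem (a b : seq nat) : b \in interls a ->
  size b = (size a).-1 /\
  (forall i, (i < size b)%N -> (nth 0 a i <= nth 0 b i < nth 0 a i.+1)%N).
Proof.
elim: a b => [|x r IH] b; first by rewrite /= inE => /eqP ->.
case: r IH => [|y r] IH; first by rewrite /= inE => /eqP ->.
have -> : interls [:: x, y & r] = [seq t :: b | t <- iota x (y - x), b <- interls (y :: r)] by [].
case/allpairsPdep => t [b'] [ht hb' ->].
have [sb hb] := IH _ hb'.
split; first by rewrite /= sb.
move: ht; rewrite mem_iota => /andP [h1 h2].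
case => [|i] /=; first by rewrite h1 /=; move: h2; case: (leqP x y) => hxy; lia.
rewrite ltnS => hi; exact: hb.
Qed.

Lemma interls_sorted (a b : seq nat) : b \in interls a -> sorted leq a -> sorted leq b.
Proof.
move=> /interls_mem [sb hb] so; apply/(sortedP 0%N) => i hi.
have h1 := hb i (ltnW hi); have h2 := hb i.+1 hi.
lia.
Qed.

Fixpoint pats (m : nat) (a : seq nat) : seq (seq (seq nat)) :=
  match m with
  | 0 => [:: [::]]
  | m'.+1 => [seq b :: P | b <- interls a, P <- pats m' b]
  end.

Lemma size_pats m (a : seq nat) : size a = m.+1 -> sorted leq a ->
  ((size (pats m a))%:R : rat) = \det (Cmx m.+1 (nth 0%N a)).
Proof.
elim: m a => [|m IH] a sa so /=.
  by rewrite det_mx11 mxE bin0.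
rewrite size_allpairs_dep -(sum_E sa so) sumnE big_map natr_sum.
apply: eq_big_seq => b hb.
have [sb _] := interls_mem hb.
apply: IH; first by rewrite sb sa.
exact: interls_sorted hb so.
Qed.

Lemma det_Cmx_id m : \det (Cmx m (fun i => i)) = 1.
Proof.
rewrite det_trig; last by apply/is_trig_mxP => i j hij; rewrite mxE bin_small.
by apply: big1 => i _; rewrite mxE binn.
Qed.

Lemma det_Cmx_formula m (a : nat -> nat) :
  \det (Cmx m a) = \prod_(i < m) \prod_(j < m | (i < j)%N)
     (((a j)%:R - (a i)%:R) / ((j : nat)%:R - (i : nat)%:R)).
Proof.
have h1 := det_Cmx m a; have h2 := det_Cmx m (fun i => i).
rewrite det_Cmx_id in h2.
rewrite h1.
have nz : \prod_(j < m) (j`!)%:R != (0 : rat).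
  by rewrite prodf_seq_neq0; apply/allP => j _ /=; rewrite pnatr_eq0 -lt0n fact_gt0.
have eF : \prod_(j < m) (j`!)%:R = \prod_(i < m) \prod_(j < m | (i < j)%N) ((j : nat)%:R - (i : nat)%:R) :> rat.
  by move: h2 => /(congr1 (fun x => x * \prod_(j < m) (j`!)%:R)); rewrite mul1r divfK.
rewrite eF.
rewrite [RHS](eq_bigr (fun i : 'I_m => (\prod_(j < m | (i < j)%N) ((a j)%:R - (a i)%:R)) /
   (\prod_(j < m | (i < j)%N) ((j : nat)%:R - (i : nat)%:R)))); last first.
  by move=> i _; rewrite big_split /= prodfV.
by rewrite big_split /= prodfV.
Qed.

Lemma interls_memP (a b : seq nat) :
  size b = (size a).-1 ->
  (forall i, (i < size b)%N -> (nth 0 a i <= nth 0 b i < nth 0 a i.+1)%N) ->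
  b \in interls a.
Proof.
elim: a b => [|x r IH] b; first by case: b.
case: r IH => [|y r] IH; first by case: b.
have -> : interls [:: x, y & r] = [seq t :: b | t <- iota x (y - x), b <- interls (y :: r)] by [].
case: b => [//|t b] hsb hb.
have sb : size b = (size (y :: r)).-1 by case: hsb.
apply/allpairsPdep; exists t, b; split => //.
  rewrite mem_iota; have := hb 0%N isT => /=; lia.
apply: IH => // i hi; exact: (hb i.+1).
Qed.

Lemma interls_uniq (a : seq nat) : uniq (interls a).
Proof.
elim: a => [|x r IH] //.
case: r IH => [|y r] IH //.
have -> : interls [:: x, y & r] = [seq t :: b | t <- iota x (y - x), b <- interls (y :: r)] by [].
apply: allpairs_uniq_dep => //; first exact: iota_uniq.
by case=> [u v] [u' v'] _ _ /= [-> ->].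
Qed.

Lemma pats_uniq m (a : seq nat) : uniq (pats m a).
Proof.
elim: m a => [|m IH] a //=.
apply: allpairs_uniq_dep => //; first exact: interls_uniq.
by case=> [u v] [u' v'] _ _ /= [-> ->].
Qed.

Lemma mem_pats m (a : seq nat) P :
  (P \in pats m a) = (size P == m) && path (fun u v => v \in interls u) a P.
Proof.
elim: m a P => [|m IH] a P /=; first by case: P.
apply/idP/idP.
  case/allpairsPdep => b [P'] [hb hP' ->] /=.
  by move: hP'; rewrite IH hb => /andP [/eqP -> ->]; rewrite eqxx.
case: P => [//|b0 P] /= /andP [hs /andP [hb hp]].
apply/allpairsPdep; exists b0, P; split => //.
by rewrite IH hp andbT.
Qed.

End Alg.

Section Poset.
Variable n : nat.
Implicit Types p q r : T n.

Lemma inPn p : (p \in Pn n) = (p.1 <= p.2)%N.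
Proof. by rewrite inE. Qed.
Lemma inAn p : (p \in An n) = (p.1 == 0%N :> nat).
Proof. by rewrite inE. Qed.

Lemma covE q p : cov q p =
  [&& (q.1 <= q.2)%N, (p.1 <= p.2)%N &
      ((((p.1 : nat) == (q.1 : nat).+1) && ((p.2 : nat) == q.2))
    || (((q.1 : nat) == (p.1 : nat).+1) && ((q.2 : nat) == (p.2 : nat).+1)))].
Proof. by rewrite /cov !inPn. Qed.

Lemma cov_neq q p : cov q p -> q != p.
Proof.
rewrite covE => /and3P [_ _ h]; apply/negP => /eqP e; move: h; rewrite e; lia.
Qed.

Lemma cov_prec q p : cov q p -> prec q p.
Proof. by move=> h; rewrite /prec connect1 // cov_neq. Qed.

Lemma cov_Pn q p : cov q p -> q \in Pn n /\ p \in Pn n.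
Proof. by case/and3P. Qed.

Definition mu p : nat := (2 * n - 2 * p.2 + p.1)%N.

Lemma cov_mu q p : cov q p -> (mu q < mu p)%N.
Proof.
rewrite covE /mu => /and3P [h1 h2 h3].
have := ltn_ord p.2; have := ltn_ord q.2; have := ltn_ord p.1; have := ltn_ord q.1.
lia.
Qed.

Lemma mu_le p : (mu p <= 3 * n)%N.
Proof. rewrite /mu; have := ltn_ord p.2; have := ltn_ord p.1; lia. Qed.

Lemma conn_mono (f : T n -> nat) q p :
  (forall a b, cov a b -> (f a <= f b)%N) -> connect (@cov n) q p -> (f q <= f p)%N.
Proof.
move=> hf /connectP [s].
elim: s q => [|r s IH] q /=; first by move=> _ ->.
case/andP => h1 h2 e; apply: leq_trans (hf _ _ h1) _; exact: IH.
Qed.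

Lemma conn_monoZ (f : T n -> int) q p :
  (forall a b, cov a b -> (f a <= f b)%R) -> connect (@cov n) q p -> (f q <= f p)%R.
Proof.
move=> hf /connectP [s].
elim: s q => [|r s IH] q /=; first by move=> _ ->.
case/andP => h1 h2 e; apply: le_trans (hf _ _ h1) _; exact: IH.
Qed.

Lemma prec_last b p : prec b p -> exists2 r, cov r p & connect (@cov n) b r.
Proof.
case/andP => /connectP [s hs e] hne.
elim/last_ind: s hs e hne => [|s r _] hs e hne; first by move: hne; rewrite e eqxx.
rewrite last_rcons in e; subst r.
move: hs; rewrite rcons_path => /andP [h1 h2].
exists (last b s) => //; apply/connectP; by exists s.
Qed.

Definition pt (i j : nat) : T n := (inord i, inord j).

Lemma pt_val p : pt p.1 p.2 = p.
Proof. by case: p => a b; rewrite /pt !inord_val. Qed.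

Lemma pt1 i j : (i <= n)%N -> ((pt i j).1 : nat) = i.
Proof. by move=> h; rewrite /= inordK. Qed.
Lemma pt2 i j : (j <= n)%N -> ((pt i j).2 : nat) = j.
Proof. by move=> h; rewrite /= inordK. Qed.

Lemma lower_cov p : p \in Pn n -> (p.1 : nat) != 0%N -> cov (pt (p.1).-1 p.2) p.
Proof.
rewrite inPn => h1 h2; rewrite covE.
have := ltn_ord p.2; have := ltn_ord p.1 => l1 l2.
rewrite pt1; last lia. rewrite pt2; last lia.
apply/and3P; split; [lia|lia|].
apply/orP; left; apply/andP; split; apply/eqP; lia.
Qed.

Lemma conn_col p : p \in Pn n -> connect (@cov n) (pt 0 p.2) p.
Proof.
rewrite inPn => h.
have := ltn_ord p.2; have := ltn_ord p.1 => l1 l2.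
suff H : forall k, (k <= p.1)%N -> connect (@cov n) (pt 0 p.2) (pt k p.2).
  by rewrite -{2}(pt_val p); apply: H.
elim => [|k IH] hk; first exact: connect0.
apply: connect_trans (IH (ltnW hk)) _; apply: connect1.
rewrite covE pt1; last lia. rewrite pt1; last lia. rewrite pt2; last lia.
apply/and3P; split; [lia|lia|].
apply/orP; left; apply/andP; split; apply/eqP; lia.
Qed.

Lemma prec_col p : p \in Pn n -> (p.1 : nat) != 0%N -> prec (pt 0 p.2) p.
Proof.
move=> h1 h2; rewrite /prec conn_col //=; apply/negP => /eqP e.
move: h2; rewrite -e pt1 //.
Qed.

Lemma pt0_An j : pt 0 j \in An n.
Proof. by rewrite inAn pt1. Qed.

Lemma pt0_2 j : (j <= n)%N -> (pt 0 j).2 = inord j.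
Proof. by []. Qed.

End Poset.

Section Transfer.
Variables (n : nat) (lam : 'I_n.+1 -> nat) (U1 U2 : {set T n}).
Hypothesis hdec : is_decomposition U1 U2.
Hypothesis hadm : admissible U1 U2.
Implicit Types (p q r a b : T n) (g : {ffun T n -> nat}).
Local Open Scope ring_scope.

Lemma U2_sub p : p \in U2 -> p \in Pn n :\: An n.
Proof. by case: hdec => _ <- h; rewrite inE h orbT. Qed.
Lemma U1_sub p : p \in U1 -> p \in Pn n :\: An n.
Proof. by case: hdec => _ <- h; rewrite inE h. Qed.
Lemma U1_U2 p : p \in U1 -> p \notin U2.
Proof.
case: hdec => h _ h1; apply/negP => h2.
have : p \in U1 :&: U2 by rewrite inE h1 h2.
by rewrite h inE.
Qed.
Lemma U12 p : p \in Pn n :\: An n -> p \notin U2 -> p \in U1.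
Proof. by case: hdec => _ <-; rewrite inE => /orP [] // ->. Qed.

Lemma An_Pn p : p \in An n -> p \in Pn n.
Proof. by rewrite inAn inPn => /eqP ->. Qed.

Lemma DomE p : (p \in Pn n :\: An n) = (p \in Pn n) && (p \notin An n).
Proof. by rewrite inE andbC. Qed.

Lemma cov_U2 r p : cov r p -> p \in U2 -> r \notin U1.
Proof.
move=> h hp; apply/negP => hr; apply: hadm; exists r, p; split => //; exact: cov_prec.
Qed.

Definition ordok g := forall q p, cov q p -> (g q <= g p)%N.
Definition canon g := (forall p, p \in An n -> g p = lam p.2) /\ (forall p, p \notin Pn n -> g p = 0%N).
Definition Mx g p : nat := \max_(q | cov q p) g q.
Definition phi g : IPoint n :=
  [ffun d : Dom n => if val d \in U2 then ((g (val d))%:Z - (Mx g (val d))%:Z)%R else (g (val d))%:Z].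

Lemma xvE (x : IPoint n) p (h : p \in Pn n :\: An n) : xv x p = x (Sub p h).
Proof. by rewrite /xv insubT. Qed.

Lemma xv_phi g p : p \in Pn n :\: An n ->
  xv (phi g) p = if p \in U2 then ((g p)%:Z - (Mx g p)%:Z)%R else (g p)%:Z.
Proof. by move=> h; rewrite (xvE _ h) ffunE. Qed.

Lemma Mx_ge g r p : cov r p -> (g r <= Mx g p)%N.
Proof. by move=> h; apply: (leq_bigmax_cond r). Qed.

Lemma Mx_le g p : ordok g -> (Mx g p <= g p)%N.
Proof. by move=> ok; apply/bigmax_leqP => q h; apply: ok. Qed.

Lemma Mx_wit g p r0 : cov r0 p -> exists2 r, cov r p & Mx g p = g r.
Proof.
move=> h; rewrite /Mx (@bigop.bigmax_eq_arg _ r0 _ _ h); case: arg_maxnP => //= i Pi _; by exists i.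
Qed.

Lemma ok_conn g q p : ordok g -> connect (@cov n) q p -> (g q <= g p)%N.
Proof. by move=> ok; apply: conn_mono. Qed.

Lemma ok_prec g q p : ordok g -> prec q p -> (g q <= g p)%N.
Proof. by move=> ok /andP [h _]; apply: ok_conn. Qed.

Lemma chain_sum g b c a : ordok g -> all (fun p => p \in U2) c -> path (@prec n) b (rcons c a) ->
  (\sum_(p <- c) xv (phi g) p <= (g a)%:Z - (g b)%:Z)%R.
Proof.
move=> ok; elim: c b => [|p c IH] b /=.
  rewrite big_nil andbT => _ h; have := ok_prec ok h; rewrite subr_ge0 lez_nat //.
case/andP => hp hc /andP [hbp hpath].
rewrite big_cons xv_phi ?U2_sub // hp.
have := IH p hc hpath.
case: (prec_last hbp) => r hr hbr.
have h1 := ok_conn ok hbr; have h2 := Mx_ge g hr.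
move=> h3.
have h4 : (g b <= Mx g p)%N by apply: leq_trans h1 h2.
rewrite -lez_nat in h4.
move: h3 h4; set s := \sum_(_ <- _) _; set u := Mx g p; move=> h3 h4.
move: (s) h3 => s0 h3.
move: h3 h4; move: (g a) (g b) (g p) u s0 => A B P U S.
move=> h3 h4; lia.
Qed.


Lemma ext_phi g a : canon g -> a \in An n :|: U1 -> ext lam (phi g) a = (g a)%:Z.
Proof.
case=> hA _; rewrite inE /ext; case: ifP => [h _|h /= h1].
  by rewrite /lamv hA.
by rewrite xv_phi ?U1_sub // (negbTE (U1_U2 h1)).
Qed.

Lemma xv_phi_U1 g p : p \in U1 -> xv (phi g) p = (g p)%:Z.
Proof. by move=> h; rewrite xv_phi ?U1_sub // (negbTE (U1_U2 h)). Qed.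

Lemma phi_inCO g : ordok g -> canon g -> inCO lam U1 U2 (phi g).
Proof.
move=> ok cn; have [hA _] := cn.
split.
- move=> p a hp ha hpa; rewrite xv_phi_U1 // /lamv -hA // lez_nat; exact: ok_prec hpa.
- move=> q b hq hb hbq; rewrite xv_phi_U1 // /lamv -hA // lez_nat; exact: ok_prec hbq.
- move=> p q hp hq hpq; rewrite !xv_phi_U1 // lez_nat; exact: ok_prec hpq.
- move=> p hp; rewrite xv_phi ?U2_sub // hp subr_ge0 lez_nat; exact: Mx_le.
split.
- move=> a b c ha hb _ hc hpath.
  rewrite !ext_phi //; exact: chain_sum.
- move=> q [//|p c] hq _ /= /andP [hp hc] hpath.
  have := chain_sum ok hc hpath.
  rewrite big_cons xv_phi ?U2_sub // hp xv_phi_U1 //.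
  move: (\sum_(_ <- _) _) => S; move: (g q) (g p) (Mx g p) => A B C; lia.
Qed.

Lemma phi_inj g1 g2 : ordok g1 -> ordok g2 -> canon g1 -> canon g2 -> phi g1 = phi g2 -> g1 = g2.
Proof.
move=> ok1 ok2 [hA1 hP1] [hA2 hP2] e.
apply/ffunP => p.
suff H : forall k p, (mu p < k)%N -> g1 p = g2 p by apply: (H (mu p).+1).
elim => [//|k IH] {}p hk.
case: (boolP (p \in An n)) => hpA; first by rewrite hA1 // hA2.
case: (boolP (p \in Pn n)) => hpP; last by rewrite hP1 // hP2.
have hD : p \in Pn n :\: An n by rewrite DomE hpP hpA.
have := congr1 (fun x => xv x p) e; rewrite /= !xv_phi //.
case: ifP => _.
  have -> : Mx g1 p = Mx g2 p.
    by apply: eq_bigr => q hq; apply: IH; have := cov_mu hq; lia.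
  move=> h; apply/eqP; rewrite -eqz_nat; apply/eqP.
  move: h; move: (g1 p) (g2 p) (Mx g2 p) => A B C; lia.
by case.
Qed.

Lemma U21 p : p \in Pn n :\: An n -> p \notin U1 -> p \in U2.
Proof. by case: hdec => _ <-; rewrite inE => /orP [->|] . Qed.

Lemma ar1 (S B P : int) : (S <= P - B -> B + S <= P)%R.
Proof. lia. Qed.

Fixpoint rec (y : IPoint n) (d : nat) (p : T n) {struct d} : nat :=
  match d with
  | 0 => 0%N
  | d'.+1 => if p \in An n then lam p.2
             else if p \in U2 then (absz (xv y p) + \max_(q | cov q p) rec y d' q)%N
             else if p \in Pn n then absz (xv y p) else 0%N
  end.

Definition psi (y : IPoint n) : {ffun T n -> nat} := [ffun p => rec y (3 * n).+2 p].

Lemma rec_stable y d p : (mu p < d)%N -> rec y d p = rec y d.+1 p.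
Proof.
elim: d p => [//|d IH] p hp /=.
case: ifP => // _; case: ifP => // _; congr (_ + _)%N.
apply: eq_bigr => q hq; apply: IH; have := cov_mu hq; lia.
Qed.

Lemma rec_S y d p : rec y d.+1 p =
  if p \in An n then lam p.2
  else if p \in U2 then (absz (xv y p) + \max_(q | cov q p) rec y d q)%N
  else if p \in Pn n then absz (xv y p) else 0%N.
Proof. by []. Qed.

Lemma psi_eq y p : psi y p =
  if p \in An n then lam p.2
  else if p \in U2 then (absz (xv y p) + Mx (psi y) p)%N
  else if p \in Pn n then absz (xv y p) else 0%N.
Proof.
rewrite ffunE rec_S; case: ifP => // _; case: ifP => // _; congr (_ + _)%N.
apply: eq_bigr => q hq; rewrite ffunE (@rec_stable y (3 * n).+1) //.
have := cov_mu hq; have := mu_le p; lia.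
Qed.

Section WithY.
Variable y : IPoint n.
Hypothesis hy : inCO lam U1 U2 y.

Lemma y_ge0 p : p \in Pn n :\: An n -> (0 <= xv y p)%R.
Proof.
move=> hp; case: hy => h1 h2 h3 h4 _.
case: (boolP (p \in U2)) => hU2; first exact: h4.
have hU1 := U12 hp hU2.
move: hp; rewrite DomE => /andP [hP hA].
have hb : prec (pt n 0 p.2) p by apply: prec_col => //; rewrite inAn in hA.
have := h2 _ _ hU1 (pt0_An _ _) hb; rewrite /lamv; by apply: le_trans.
Qed.

Lemma absy p : p \in Pn n :\: An n -> ((absz (xv y p))%:Z = xv y p)%R.
Proof. by move=> h; rewrite gez0_abs // y_ge0. Qed.

Lemma canon_psi : canon (psi y).
Proof.
split => p hp; rewrite psi_eq.
  by rewrite hp.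
have hA : p \notin An n by apply: contra hp; apply: An_Pn.
have hU : p \notin U2 by apply: contra hp => /U2_sub; rewrite DomE => /andP [].
by rewrite (negbTE hA) (negbTE hU) (negbTE hp).
Qed.

Lemma phi_psi : phi (psi y) = y.
Proof.
apply/ffunP => d; rewrite ffunE.
have hd := valP d; move: hd; rewrite DomE => /andP [hP hA].
have hxv : xv y (val d) = y d by rewrite /xv valK.
have hD : val d \in Pn n :\: An n by rewrite DomE hP hA.
case: ifP => hU; rewrite [psi y (val d)]psi_eq (negbTE hA) hU.
  by rewrite PoszD addrK -hxv absy.
by rewrite hP -hxv absy.
Qed.

Definition chainP q b c :=
  [/\ b \in An n, c != [::], all (fun p => p \in U2) c, path (@prec n) b c & last b c = q] /\
      ((psi y q)%:Z = (lam b.2)%:Z + \sum_(p <- c) xv y p)%R.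

Lemma chainC q : q \in U2 -> exists b, exists c, chainP q b c.
Proof.
suff H : forall k q, (mu q < k)%N -> q \in U2 -> exists b, exists c, chainP q b c.
  exact: (H (mu q).+1 q (ltnSn _)).
elim => [//|k IH] {}q hk hq.
have hqD := U2_sub hq; move: (hqD); rewrite DomE => /andP [hqP hqA].
have hq1 : (q.1 : nat) != 0%N by rewrite inAn in hqA.
have [r hr hM] := Mx_wit (psi y) (lower_cov hqP hq1).
have hpq : psi y q = (absz (xv y q) + psi y r)%N by rewrite psi_eq (negbTE hqA) hq hM.
have hrU1 := cov_U2 hr hq.
have [hrP _] := cov_Pn hr.
case: (boolP (r \in An n)) => hrA.
  exists r, [:: q]; split; first by split => //=; rewrite ?hq ?cov_prec.
  rewrite hpq big_seq1 PoszD absy // addrC; congr (_ + _)%R.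
  by rewrite psi_eq hrA.
have hrD : r \in Pn n :\: An n by rewrite DomE hrP hrA.
have hrU2 := U21 hrD hrU1.
have hr2 : (mu r < k)%N by exact: leq_trans (cov_mu hr) hk.
have [b [c [[hb hc hall hpath hlast] hval]]] := IH r hr2 hrU2.
exists b, (rcons c q); split.
  split => //.
  - by case: (c).
  - by rewrite all_rcons hq hall.
  - by rewrite rcons_path hpath hlast cov_prec.
  - by rewrite last_rcons.
rewrite hpq PoszD absy // hval -cats1 big_cat big_seq1 /=.
by rewrite [LHS]addrC [RHS]addrA.
Qed.

Lemma psi_ext p : p \in An n :|: U1 -> (psi y p)%:Z = ext lam y p.
Proof.
rewrite inE /ext psi_eq; case: ifP => [hA _|hA /= hU1] //.
have hD := U1_sub hU1; move: (hD); rewrite DomE => /andP [hP _].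
by rewrite (negbTE (U1_U2 hU1)) hP absy.
Qed.

Lemma ordok_psi : ordok (psi y).
Proof.
move=> r p hrp; have [hrP hpP] := cov_Pn hrp.
case: hy => h1 h2 h3 h4 [h5 h6].
case: (boolP (p \in U2)) => hpU2.
  have hpA : p \notin An n by have := U2_sub hpU2; rewrite DomE => /andP [].
  rewrite [psi y p]psi_eq (negbTE hpA) hpU2.
  exact: leq_trans (Mx_ge _ hrp) (leq_addl _ _).
have hpA1 : p \in An n :|: U1.
  rewrite inE; case: (boolP (p \in An n)) => //= hpA; apply: U12 => //; by rewrite DomE hpP.
rewrite -lez_nat (psi_ext hpA1).
case: (boolP (r \in U2)) => hrU2.
  have [b [c [[hb hc hall hpath hlast] hval]]] := chainC hrU2.
  rewrite hval.
  have hb1 : b \in An n :|: U1 by rewrite inE hb.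
  have := h5 p b c hpA1 hb1 hc hall.
  rewrite rcons_path hpath hlast cov_prec //= => /(_ isT).
  rewrite /ext hb /lamv.
  move: (\sum_(_ <- _) _) => S; move: (lam b.2) => B.
  by case: ifP => _; [move: (Posz (lam p.2)) | move: (xv y p)] => P; apply: ar1.
have hrA1 : r \in An n :|: U1.
  rewrite inE; case: (boolP (r \in An n)) => //= hrA; apply: U12 => //; by rewrite DomE hrP.
rewrite (psi_ext hrA1).
move: hpA1 hrA1; rewrite !in_setU /ext.
case: (boolP (p \in An n)) => hpA; case: (boolP (r \in An n)) => hrA //= hpU1 hrU1.
- exfalso; move: hrp hpA hrA; rewrite covE !inAn; lia.
- exact: h1 _ _ hrU1 hpA (cov_prec hrp).
- exact: h2 _ _ hpU1 hrA (cov_prec hrp).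
- exact: h3 _ _ hrU1 hpU1 (cov_prec hrp).
Qed.

End WithY.
End Transfer.

Section Pat.
Variables (n : nat) (lam : 'I_n.+1 -> nat).
Implicit Types (g : {ffun T n -> nat}) (P : seq (seq nat)).

Definition rowseq g (i : nat) : seq nat :=
  [seq (g (pt n i (n - k)) + k)%N | k <- iota 0 (n - i).+1].
Definition alam : seq nat := [seq (lam (inord (n - k)) + k)%N | k <- iota 0 n.+1].
Definition rowsOf g : seq (seq nat) := [seq rowseq g i | i <- iota 1 n].
Definition gOf P : {ffun T n -> nat} :=
  [ffun p => if p \in An n then lam p.2
             else if p \in Pn n then (nth 0 (nth [::] P (p.1).-1) (n - p.2) - (n - p.2))%N
             else 0%N].

Lemma size_rowseq g i : size (rowseq g i) = (n - i).+1.
Proof. by rewrite size_map size_iota. Qed.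

Lemma nth_rowseq g i k : (k <= n - i)%N -> nth 0 (rowseq g i) k = (g (pt n i (n - k)) + k)%N.
Proof. by move=> h; rewrite (nth_map 0%N) ?size_iota ?ltnS // nth_iota ?ltnS. Qed.

Lemma size_alam : size alam = n.+1.
Proof. by rewrite size_map size_iota. Qed.

Lemma nth_alam k : (k <= n)%N -> nth 0 alam k = (lam (inord (n - k)) + k)%N.
Proof. by move=> h; rewrite (nth_map 0%N) ?size_iota ?ltnS // nth_iota ?ltnS. Qed.

Lemma alam_sorted : (forall i j : 'I_n.+1, (i <= j)%N -> (lam j <= lam i)%N) -> sorted leq alam.
Proof.
move=> hl; apply/(sortedP 0%N) => k; rewrite size_alam ltnS => hk.
rewrite !nth_alam ?(ltnW hk) //.
have : (lam (inord (n - k)) <= lam (inord (n - k.+1)))%N.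
  apply: hl; rewrite !inordK; [lia|lia|lia].
move: (lam _) (lam _) => A B; lia.
Qed.

Lemma rowseq0 g : canon lam g -> rowseq g 0 = alam.
Proof.
case=> hA _; rewrite /rowseq /alam subn0; apply: eq_map => k.
by rewrite hA // pt0_An.
Qed.

Lemma covpt i j i' j' : (i <= n)%N -> (j <= n)%N -> (i' <= n)%N -> (j' <= n)%N ->
  cov (pt n i j) (pt n i' j') = [&& (i <= j)%N, (i' <= j')%N &
      ((i' == i.+1) && (j' == j)) || ((i == i'.+1) && (j == j'.+1))].
Proof. by move=> *; rewrite covE /= !inordK. Qed.

Lemma cov_down i j : (i < j)%N -> (j <= n)%N -> cov (pt n i j) (pt n i.+1 j).
Proof.
move=> h1 h2; rewrite covpt; lia.
Qed.

Lemma cov_diag i j : (i <= j)%N -> (j < n)%N -> cov (pt n i.+1 j.+1) (pt n i j).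
Proof.
move=> h1 h2; rewrite covpt; lia.
Qed.

Lemma ar2 (a b k : nat) : (a <= b)%N -> (a + k <= b + k)%N.
Proof. lia. Qed.
Lemma ar3 (a b k : nat) : (a <= b)%N -> (a + k < b + k.+1)%N.
Proof. lia. Qed.

Lemma rowseq_interl g i : ordok g -> (i < n)%N -> rowseq g i.+1 \in interls (rowseq g i).
Proof.
move=> ok hi; apply: interls_memP; first by rewrite !size_rowseq; lia.
rewrite size_rowseq => k hk.
rewrite !nth_rowseq; try lia.
apply/andP; split.
  apply: ar2; apply: ok; apply: cov_down; lia.
rewrite (_ : n - k = (n - k.+1).+1)%N; last lia.
apply: ar3; apply: ok; apply: cov_diag; lia.
Qed.

Lemma nth_rowsOf g i : (i < n)%N -> nth [::] (rowsOf g) i = rowseq g i.+1.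
Proof. by move=> h; rewrite (nth_map 0%N) ?size_iota // nth_iota // add1n. Qed.

Lemma rowsOf_pats g : ordok g -> canon lam g -> rowsOf g \in pats n alam.
Proof.
move=> ok cn; rewrite mem_pats size_map size_iota eqxx /=.
apply/(pathP [::]) => i; rewrite size_map size_iota => hi.
rewrite nth_rowsOf //.
have -> : nth [::] (alam :: rowsOf g) i = rowseq g i.
  case: i hi => [|i] hi /=; first by rewrite rowseq0.
  by rewrite nth_rowsOf // ltnW.
exact: rowseq_interl.
Qed.

Lemma gOf_rowsOf g : canon lam g -> gOf (rowsOf g) = g.
Proof.
case=> hA hP; apply/ffunP => -[a b]; rewrite ffunE.
case: ifP => hpA; first by rewrite hA.
case: ifP => hpP; last by rewrite hP // hpP.
move: hpA hpP; rewrite inAn inPn /= => /negbT h1 h2.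
have {}h1 : (0 < a)%N by rewrite lt0n.
have l1 := ltn_ord a; have l2 := ltn_ord b.
rewrite nth_rowsOf; last by rewrite prednK //; lia.
rewrite prednK // nth_rowseq; last lia.
rewrite addnK.
rewrite (_ : n - (n - b) = b)%N; last lia.
by rewrite (pt_val (a, b)).
Qed.

Section FromP.
Variable P : seq (seq nat).
Hypothesis hP : P \in pats n alam.
Let R i := nth [::] (alam :: P) i.

Lemma sizeP : size P = n.
Proof. by move: hP; rewrite mem_pats => /andP [/eqP]. Qed.

Lemma R_interl i : (i < n)%N -> R i.+1 \in interls (R i).
Proof.
move=> hi; move: hP; rewrite mem_pats => /andP [_ /(pathP [::])].
by move=> /(_ i); rewrite sizeP => /(_ hi).
Qed.

Lemma size_R i : (i <= n)%N -> size (R i) = (n - i).+1.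
Proof.
elim: i => [|i IH] hi; first by rewrite /R (_ : nth [::] (alam :: P) 0 = alam) // size_alam subn0.
have [-> _] := interls_mem (R_interl hi).
rewrite IH; [lia|lia].
Qed.

Lemma R_ineq i k : (i < n)%N -> (k < n - i)%N ->
  (nth 0 (R i) k <= nth 0 (R i.+1) k < nth 0 (R i) k.+1)%N.
Proof.
move=> hi hk; have [hs hb] := interls_mem (R_interl hi); apply: hb.
by rewrite size_R; [lia|lia].
Qed.

Lemma R_lb i k : (i <= n)%N -> (k <= n - i)%N -> (k <= nth 0 (R i) k)%N.
Proof.
elim: i k => [|i IH] k hi hk.
  by rewrite /R (_ : nth [::] (alam :: P) 0 = alam) // nth_alam; [lia|lia].
have := R_ineq (i := i) (k := k); rewrite /R /=.
have := IH k; rewrite /R /=; move=> h1 h2.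
have h3 := h1 (ltnW hi) ltac:(lia).
have h4 := h2 hi ltac:(lia).
lia.
Qed.

Lemma gOfE p : p \in Pn n -> gOf P p = (nth 0 (R p.1) (n - p.2) - (n - p.2))%N.
Proof.
case: p => a b hp; rewrite ffunE hp /=.
have l1 := ltn_ord a; have l2 := ltn_ord b.
case: ifP => hA.
  move: hA; rewrite inAn /= => /eqP h.
  rewrite /R h (_ : nth [::] (alam :: P) 0 = alam) // nth_alam; last lia.
  rewrite addnK; congr (lam _); apply: val_inj; rewrite /= inordK; lia.
move: hA; rewrite inAn /= => hA.
by rewrite /R; case: (nat_of_ord a) hA.
Qed.

Lemma ar4 (x y k : nat) : (x <= y)%N -> (x - k <= y - k)%N.
Proof. lia. Qed.
Lemma ar5 (x y k : nat) : (x < y)%N -> (x - k <= y - k.+1)%N.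
Proof. lia. Qed.

Lemma ordok_gOf : ordok (gOf P).
Proof.
move=> q p hqp; have [hq hp] := cov_Pn hqp.
rewrite !gOfE //.
move: hqp hq hp; case: q => a b; case: p => c d.
rewrite covE /= !inPn /= => /and3P [h1 h2 h3] _ _.
have l1 := ltn_ord a; have l2 := ltn_ord b; have l3 := ltn_ord c; have l4 := ltn_ord d.
case/orP: h3 => /andP [/eqP e1 /eqP e2].
  rewrite e1 e2; apply: ar4.
  by have /andP [] := @R_ineq a (n - b) ltac:(lia) ltac:(lia).
rewrite e1 e2.
have := @R_ineq c (n - d.+1) ltac:(lia) ltac:(lia).
rewrite (_ : (n - d.+1).+1 = n - d)%N; last lia.
case/andP => _ h; move: (ar5 (n - d.+1) h).
by rewrite (_ : (n - d.+1).+1 = n - d)%N; last lia.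
Qed.

Lemma canon_gOf : canon lam (gOf P).
Proof.
split => p hp; rewrite ffunE.
  by rewrite hp.
by rewrite (negbTE hp) (_ : p \in An n = false) //; apply/negP => /An_Pn; apply/negP.
Qed.

Lemma rowsOf_gOf : rowsOf (gOf P) = P.
Proof.
apply: (@eq_from_nth _ [::]); first by rewrite size_map size_iota sizeP.
move=> i; rewrite size_map size_iota => hi.
rewrite nth_rowsOf //.
have -> : nth [::] P i = R i.+1 by [].
apply: (@eq_from_nth _ 0%N); first by rewrite size_rowseq size_R.
move=> k; rewrite size_rowseq => hk.
rewrite nth_rowseq; last lia.
rewrite gOfE; last by rewrite inPn /= !inordK; lia.
rewrite /= !inordK; try lia.
rewrite (_ : n - (n - k) = k)%N; last lia.
have := @R_lb i.+1 k ltac:(lia) ltac:(lia).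
move: (nth _ _ _) => x; lia.
Qed.
End FromP. End Pat.

From mathcomp Require Import ring.

Lemma prod_pairs_rev m (F : 'I_m -> 'I_m -> rat) :
  (\prod_(i < m) \prod_(j < m | (i < j)%N) F i j =
   \prod_(i < m) \prod_(j < m | (i < j)%N) F (rev_ord j) (rev_ord i))%R.
Proof.
rewrite !pair_big_dep /=.
rewrite (reindex_inj (h := fun p : 'I_m * 'I_m => (rev_ord p.2, rev_ord p.1))) /=; last first.
  case=> a b [c d] [e1 e2]; have la := ltn_ord a; have lb := ltn_ord b; have lc := ltn_ord c; have ld := ltn_ord d.
  by move: e1 e2 => /= e1 e2; congr pair; apply: ord_inj; lia.
apply: eq_bigl => -[a b] /=.
have := ltn_ord a; have := ltn_ord b; lia.
Qed.

Lemma factor_eq n (lam : 'I_n.+1 -> nat) (i j : 'I_n.+1) : (i < j)%N ->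
  ((((nth 0%N (alam lam) (rev_ord i))%:R - (nth 0%N (alam lam) (rev_ord j))%:R) /
     (((rev_ord i : nat)%:R - (rev_ord j : nat)%:R)) : rat) =
  (((lam i)%:R - (lam j)%:R + (j : nat)%:R - (i : nat)%:R) / ((j : nat)%:R - (i : nat)%:R)))%R.
Proof.
move=> hij.
have li := ltn_ord i; have lj := ltn_ord j.
rewrite !nth_alam /=; try lia.
have -> : (inord (n - (n.+1 - i.+1)) : 'I_n.+1) = i.
  apply: val_inj; rewrite /= inordK; lia.
have -> : (inord (n - (n.+1 - j.+1)) : 'I_n.+1) = j.
  apply: val_inj; rewrite /= inordK; lia.
rewrite (_ : (n.+1 - i.+1 = n - i)%N); last lia.
rewrite (_ : (n.+1 - j.+1 = n - j)%N); last lia.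
rewrite !natrD !natrB; try lia.
by congr (_ / _)%R; ring.
Qed.

Theorem corollary6p4 (n : nat) (lam : 'I_n.+1 -> nat) (U1 U2 : {set T n}) :
  (1 <= n)%N ->
  (forall i j : 'I_n.+1, (i <= j)%N -> (lam j <= lam i)%N) ->
  is_decomposition U1 U2 ->
  admissible U1 U2 ->
  exists s : seq (IPoint n),
    [/\ uniq s,
        forall x : IPoint n, x \in s <-> inCO lam U1 U2 x &
        ((size s)%:R =
          \prod_(i < n.+1) \prod_(j < n.+1 | (i < j)%N)
            (((lam i)%:R - (lam j)%:R + (j : nat)%:R - (i : nat)%:R)
               / ((j : nat)%:R - (i : nat)%:R)) :> rat)%R].
Proof.
move=> hn hl hdec hadm.
exists [seq phi U2 (gOf lam P) | P <- pats n (alam lam)]; split.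
- rewrite map_inj_in_uniq ?pats_uniq // => P1 P2 h1 h2 e.
  have e' := phi_inj (ordok_gOf h1) (ordok_gOf h2) (canon_gOf lam P1) (canon_gOf lam P2) e.
  by rewrite -(rowsOf_gOf h1) -(rowsOf_gOf h2) e'.
- move=> x; split.
    case/mapP => P hP ->; apply: (phi_inCO hdec); [exact: ordok_gOf | exact: canon_gOf].
  move=> hx; apply/mapP; exists (rowsOf (psi lam U2 x)).
    apply: rowsOf_pats; [exact: (ordok_psi hdec hadm hx) | exact: (canon_psi lam hdec x)].
  rewrite gOf_rowsOf; first by rewrite (phi_psi hdec hx).
  exact: (canon_psi lam hdec x).
rewrite size_map (size_pats (size_alam lam) (alam_sorted hl)) det_Cmx_formula.
rewrite prod_pairs_rev; apply: eq_bigr => i _; apply: eq_bigr => j hij.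
exact: factor_eq.
Qed.
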